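(* Let $\mathcal{A}$ be a finite set, $d\ge1$, and let $\mathcal{M}=\{(\mu_i,D_i)\}_{i=1}^\infty$ be locally mixing with $D_i\uparrow\mathbb{Z}^d$ as $i\to\infty$ (each $\mu_i$ a probability measure on $\mathcal{A}^{D_i}$). Then $\mu_i$ converges as $i\to\infty$ (in the sense of convergence of the marginals on every finite set) to a probability measure $\mu$ on $\mathcal{A}^{\mathbb{Z}^d}$, and $\mu$ is locally mixing with the same rate function.
   Context: A rate function is a decreasing function $\rho:\mathbb{N}\to[0,\infty)$ with $\rho(k)\to0$ as $k\to\infty$. Let $\Lambda_n=[-n,n]^d\cap\mathbb{Z}^d$. Let $\mathcal{M}$ be a collection of pairs $(\mu,D)$ with $D\subset\mathbb{Z}^d$ (possibly infinite) and $\mu$ a probability measure on $\mathcal{A}^D$. $\mathcal{M}$ is locally mixing with rate function $\rho$ if for every $n\ge1$ and all $(\mu,D),(\mu',D')\in\mathcal{M}$ with $\Lambda_n\subset D\cap D'$ there exists a coupling of $f\sim\mu$ and $f'\sim\mu'$ such that (1) $f|_{D\setminus\Lambda_n}$ and $f'$ are independent, and (2) $\mathbb{P}(f(v)\neq f'(v))\le\rho(n-k)$ for every $0\le k\le n$ and every $v\in\Lambda_k$. $\mathcal{M}$ is locally mixing if it is locally mixing with some rate function. A single measure $\mu$ on $\mathcal{A}^{\mathbb{Z}^d}$ is locally mixing (with rate $\rho$) if $\{(\mu,\mathbb{Z}^d)\}$ is. *)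

(* Defs.v *)
From HB Require Import structures.
From mathcomp Require Import all_boot all_order all_algebra.
From mathcomp Require Import all_classical all_reals.
From mathcomp Require Import ereal topology normedtype sequences measure probability.
Set Implicit Arguments. Unset Strict Implicit. Unset Printing Implicit Defensive.
Import Order.TTheory GRing.Theory Num.Theory.
Import numFieldNormedType.Exports.
Local Open Scope classical_set_scope.
Local Open Scope ring_scope.

Definition Zd (d : nat) := 'I_d -> int.

Definition box (d n : nat) : set (Zd d) :=
  [set v | forall j : 'I_d, (- (n%:Z) <= v j <= n%:Z)%R].
Arguments box : clear implicits.

Definition sub (d : nat) (D : set (Zd d)) := {v : Zd d | D v}.

Definition cyl (A : pointedType) (d : nat) (D : set (Zd d)) : set (set (sub D -> A)) :=
  [set B | exists (v : sub D) (a : A), B = [set f | f v = a]].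

(* A^D with the product sigma-algebra *)
Notation cfg A D := (g_sigma_algebraType (@cyl A _ D)).

Definition restr_out (A : pointedType) (d : nat) (D : set (Zd d)) (n : nat)
  (f : cfg A D) : cfg A (D `\` box d n) :=
  fun v => f (exist _ (proj1_sig v) (proj1 (proj2_sig v))).
Arguments restr_out {A d D} n f.

Definition rate_function (R : realType) (rho : nat -> R) : Prop :=
  (forall m n : nat, (m <= n)%N -> rho n <= rho m) /\
  (forall k, 0 <= rho k) /\
  rho @ \oo --> (0 : R).

(* A coupling pi (joint law of (f, f')) of mu and mu' witnessing the local
   mixing requirement at scale n with rate rho *)
Definition mixing_coupling (A : pointedType) (d : nat) (R : realType)
  (rho : nat -> R) (n : nat) (D D' : set (Zd d))
  (mu : probability (cfg A D) R) (mu' : probability (cfg A D') R)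
  (pi : probability (cfg A D * cfg A D')%type R) : Prop :=
  (forall B : set (cfg A D), measurable B -> pi (B `*` setT) = mu B) /\
  (forall C : set (cfg A D'), measurable C -> pi (setT `*` C) = mu' C) /\
  (forall (B : set (cfg A (D `\` box d n))) (C : set (cfg A D')),
      measurable B -> measurable C ->
      pi ((restr_out n @^-1` B) `*` C) =
      (pi ((restr_out n @^-1` B) `*` setT) * pi (setT `*` C))%E) /\
  (forall (k : nat) (v : Zd d) (hv : D v) (hv' : D' v),
      (k <= n)%N -> box d k v ->
      (pi [set p | p.1 (exist _ v hv) <> p.2 (exist _ v hv')]
        <= (rho (n - k)%N)%:E)%E).

Definition locally_mixing_with (A : pointedType) (d : nat) (R : realType)
  (I : Type) (D : I -> set (Zd d)) (mu : forall i, probability (cfg A (D i)) R)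
  (rho : nat -> R) : Prop :=
  rate_function rho /\
  forall (n : nat), (1 <= n)%N -> forall i j : I,
    box d n `<=` D i `&` D j ->
    exists pi : probability (cfg A (D i) * cfg A (D j))%type R,
      mixing_coupling rho n (mu i) (mu j) pi.

Definition cyl_event (A : pointedType) (d : nat) (D : set (Zd d))
  (F : set (Zd d)) (eta : Zd d -> A) : set (cfg A D) :=
  [set f | forall (v : Zd d) (hv : D v), F v -> f (exist _ v hv) = eta v].
Arguments cyl_event {A d} D F eta.

(* Main.v *)
Require Import Defs.
From HB Require Import structures.
From mathcomp Require Import all_boot all_order all_algebra.
From mathcomp Require Import all_classical all_reals.
From mathcomp Require Import ereal topology normedtype sequences measure probability.
From Stdlib Require List.
From mathcomp Require Import lra zify.
Import numFieldNormedType.Exports.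
Set Implicit Arguments. Unset Strict Implicit. Unset Printing Implicit Defensive.
Import Order.TTheory GRing.Theory Num.Theory.
Local Open Scope classical_set_scope.
Local Open Scope ring_scope.

Definition cylI (I : Type) (B : pointedType) : set (set (I -> B)) :=
  [set S | exists (v : I) (a : B), S = [set f | f v = a]].

Definition detl (I : Type) (B : Type) (s : seq I) (E : set (I -> B)) :=
  forall x y : I -> B, (forall v, List.In v s -> x v = y v) -> E x -> E y.

Definition fd (I : Type) (B : Type) (E : set (I -> B)) := exists s, detl s E.

Section fd_sec.
Variables (I : Type) (B : Type).
Implicit Types E : set (I -> B).

Lemma detl_sym s E x y : detl s E -> (forall v, List.In v s -> x v = y v) -> E x = E y.
Proof.
move=> h e; apply/propext; split; first exact: h.
by apply: h => v /e ->.
Qed.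

Lemma fd0 : fd (set0 : set (I -> B)).
Proof. by exists [::] => x y _. Qed.

Lemma fdT : fd [set: I -> B].
Proof. by exists [::] => x y _. Qed.

Lemma fdC E : fd E -> fd (~` E).
Proof.
move=> [s h]; exists s => x y e nx ey; apply: nx.
by rewrite (detl_sym h e).
Qed.

Lemma fdU E1 E2 : fd E1 -> fd E2 -> fd (E1 `|` E2).
Proof.
move=> [s1 h1] [s2 h2]; exists (s1 ++ s2) => x y e [ex|ex].
  by left; apply: (h1 x) => // v hv; apply: e; apply: List.in_or_app; left.
by right; apply: (h2 x) => // v hv; apply: e; apply: List.in_or_app; right.
Qed.

Lemma fdI E1 E2 : fd E1 -> fd E2 -> fd (E1 `&` E2).
Proof.
move=> h1 h2; rewrite -[_ `&` _]setCK setCI; apply: fdC; apply: fdU; exact: fdC.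
Qed.

Lemma fdD E1 E2 : fd E1 -> fd E2 -> fd (E1 `\` E2).
Proof. by move=> h1 h2; rewrite setDE; apply: fdI => //; exact: fdC. Qed.

Lemma fd_big (J : Type) (r : seq J) (F : J -> set (I -> B)) :
  (forall j, fd (F j)) -> fd (\big[setU/set0]_(j <- r) F j).
Proof.
move=> h; elim: r => [|j r ih]; first by rewrite big_nil; exact: fd0.
by rewrite big_cons; apply: fdU.
Qed.

End fd_sec.

Definition upd (I : Type) (B : Type) (x : I -> B) (v : I) (b : B) : I -> B :=
  fun w => if `[< w = v >] then b else x w.

Lemma fd_meas (I : Type) (B : pointedType) (fB : finite_set [set: B])
  (E : set (g_sigma_algebraType (@cylI I B))) : fd E -> measurable E.
Proof.
have [lB hlB] := (finite_seqP _).1 fB.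
have inlB b : b \in lB.
  by have : [set: B] b by []; rewrite hlB.
move=> [s]; elim: s E => [|v s ih] E h.
  have [[x0 ex0]|nE] := pselect (exists x, E x).
    have -> : E = setT by apply/seteqP; split => // y _; exact: (h x0).
    exact: measurableT.
  have -> : E = set0 by apply/seteqP; split => // y ey; apply: nE; exists y.
  exact: measurable0.
pose Eb b : set (I -> B) := [set x | E (upd x v b)].
have -> : E = \big[setU/set0]_(b <- lB) ([set x | x v = b] `&` Eb b).
  apply/seteqP; split => x.
    move=> ex; rewrite -bigcup_seq; exists (x v); first exact: inlB.
    split => //; rewrite /Eb /=; apply: (h x) => // w _.
    by rewrite /upd; case: asboolP => // ->.
  rewrite -bigcup_seq => -[b _ [/= xv eb]]; apply: (h _ _ _ eb) => w _.
  by rewrite /upd; case: asboolP => // ->.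
apply: bigsetU_measurable => b _; apply: measurableI.
  by apply: sub_sigma_algebra; exists v, b.
apply: ih => x y e; rewrite /Eb /=; apply: h => w [<-|ws].
  by rewrite /upd; case: asboolP.
by rewrite /upd; case: asboolP => // _; exact: e.
Qed.
Lemma ultra_big (T J : Type) (W : set_system T) (hW : UltraFilter W) (l : seq J)
  (S : J -> set T) : W (\big[setU/set0]_(j <- l) S j) -> exists j, W (S j).
Proof.
elim: l => [|j l ih]; rewrite ?big_nil ?big_cons.
  by move=> h; exfalso; exact: (@filter_not_empty _ W _ h).
move=> h; case: (in_ultra_setVsetC (S j) hW) => [hj|hn]; first by exists j.
apply: ih; apply: (filterS _ (filterI h hn)) => x [[//|]] //.
Qed.

Lemma fd_fip (I : Type) (B : pointedType) (fB : finite_set [set: B])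
  (G : nat -> set (I -> B)) : (forall k, fd (G k)) ->
  (forall k, G k.+1 `<=` G k) -> (forall k, G k !=set0) ->
  exists x, forall k, G k x.
Proof.
move=> fG decG neG.
have [lB hlB] := (finite_seqP _).1 fB.
have inlB b : b \in lB by have : [set: B] b by []; rewrite hlB.
have decG' i j : (i <= j)%N -> G j `<=` G i.
  move=> /subnK <-; elim: (j - i)%N => // k ih.
  by rewrite addSn; apply: subset_trans ih; exact: decG.
have Ff : Filter (filter_from [set: nat] G).
  apply: filter_from_filter; first by exists 0%N.
  move=> i j _ _; exists (maxn i j) => //; rewrite subsetI; split; apply: decG'.
    exact: leq_maxl.
  exact: leq_maxr.
have Fp : ProperFilter (filter_from [set: nat] G).
  by apply: filter_from_proper => i _; exact: neG.
have [W [hW sW]] := ultraFilterLemma Fp.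
have hv : forall v : I, exists b, W [set y : I -> B | y v = b].
  move=> v; apply: (ultra_big hW (l := lB)).
  apply: (filterS _ (@filterT _ W _)) => y _; rewrite -bigcup_seq.
  by exists (y v) => //; exact: inlB.
have [x hx] := choice hv.
exists x => k; have [s hs] := fG k.
have Ws : W [set y | forall v, List.In v s -> y v = x v].
  elim: s {hs} => [|v s ih]; first by apply: (filterS _ (@filterT _ W _)) => y _ v [].
  apply: (filterS _ (filterI (hx v) ih)) => y [yv ys] w [<-|ws] //.
  exact: ys.
have WG : W (G k) by apply: sW; exists k.
have [y [Gy ys]] := filter_ex (filterI WG Ws).
by apply: (hs y) => // v /ys.
Qed.

Lemma fd_sigma_fin (I : Type) (B : pointedType) (fB : finite_set [set: B])
  (E : set (I -> B)) (F : nat -> set (I -> B)) :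
  fd E -> (forall k, fd (F k)) -> trivIset setT F -> E = \bigcup_k F k ->
  exists K, forall k, (K <= k)%N -> F k = set0.
Proof.
move=> fE fF tF EF.
pose G k := E `\` \big[setU/set0]_(i < k) F i.
have [[K GK]|nG] := pselect (exists K, G K = set0).
  exists K => k Kk; apply/seteqP; split => // x Fkx.
  have : E x by rewrite EF; exists k.
  have : ~ G K x by rewrite GK.
  move=> nG Ex; have : (\big[setU/set0]_(i < K) F i) x.
    by apply: contra_notP nG => h; split.
  rewrite -bigcup_mkord => -[i /= iK Fix].
  have : F i `&` F k = set0.
    apply: (trivIsetP.1 tF) => //; apply/eqP => e; by rewrite e ltnNge Kk in iK.
  by move=> /seteqP[+ _] => /(_ x) /=; apply.

have [x hx] : exists x, forall k, G k x.
  apply: fd_fip => //.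
  - move=> k; apply: fdD => //; apply: fd_big => i; exact: fF.
  - move=> k y [Ey nU]; split => // h; apply: nU.
    by rewrite big_ord_recr /=; left.
  - move=> k; apply/set0P/eqP => e; apply: nG; exists k; exact: e.
have := hx 0%N; rewrite /G => -[Ex _]; move: Ex; rewrite EF => -[k _ Fkx].
have [_ nU] := hx k.+1; exfalso; apply: nU; rewrite big_ord_recr /=; right; exact: Fkx.
Qed.
Section ulim.
Variables (R : realType) (U : set_system nat) (hU : UltraFilter U).

Lemma ulim_ex (x : nat -> R) (a b : R) : (forall i, a <= x i <= b) ->
  exists l : R, x @ U --> l.
Proof.
move=> hx.
have FP : ProperFilter (x @ U) by apply: fmap_proper_filter; exact: ultra_proper.
have Fab : (x @ U) `[a, b]%classic.
  change (U (x @^-1` `[a, b]%classic)).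
  apply: (@filterS _ U _ setT); last exact: filterT.
  by move=> i _ /=; rewrite in_itv /=; exact: hx.
have [l [_ cl]] := @segment_compact R a b (x @ U) FP Fab.
exists l => N nN /=.
case: (in_ultra_setVsetC (x @^-1` N) hU) => // hc; exfalso.
have [y [ny Ny]] := cl (~` N) N hc nN.
exact: ny.
Qed.

Lemma ulim_le (x : nat -> R) (l c : R) : x @ U --> l -> (forall i, x i <= c) -> l <= c.
Proof.
move=> xl hx.
have FP : ProperFilter U by exact: ultra_proper.
apply: (@closed_cvg _ _ U FP x (fun y => y <= c) _ _ l xl).
  exact: closed_le.
by apply: (@filterS _ U _ setT) => [i _|]; [exact: hx|exact: filterT].
Qed.

Lemma ulim_ge (x : nat -> R) (l c : R) : x @ U --> l -> (forall i, c <= x i) -> c <= l.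
Proof.
move=> xl hx.
have FP : ProperFilter U by exact: ultra_proper.
apply: (@closed_cvg _ _ U FP x (fun y => c <= y) _ _ l xl).
  exact: closed_ge.
by apply: (@filterS _ U _ setT) => [i _|]; [exact: hx|exact: filterT].
Qed.

Lemma ulim_unique (x : nat -> R) (l1 l2 : R) : x @ U --> l1 -> x @ U --> l2 -> l1 = l2.
Proof.
have FP : ProperFilter U by exact: ultra_proper.
by move=> h1 h2; apply: (cvg_unique _ h1 h2); exact: norm_hausdorff.
Qed.

End ulim.
Definition fdS (I : Type) (B : pointedType) : Type := I -> B.
HB.instance Definition _ I B := Pointed.on (fdS I B).
HB.instance Definition _ I B := @isAlgebraOfSets.Build default_measure_display
  (fdS I B) (@fd I B) (@fd0 I B) (@fdU I B) (@fdC I B).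

Lemma cylI_fd (I : Type) (B : pointedType) (S : set (I -> B)) : cylI S -> fd S.
Proof.
move=> [v [a ->]]; exists [:: v] => x y e /= xv; rewrite -e //; by left.
Qed.

Section GL.
Variables (R : realType) (I : Type) (B : pointedType) (fB : finite_set [set: B]).
Variables (U : set_system nat) (hU : UltraFilter U).
Variable p : nat -> set (I -> B) -> R.
Hypothesis p01 : forall i E, fd E -> 0 <= p i E <= 1.
Hypothesis p1 : forall i, p i setT = 1.
Hypothesis padd : forall i E1 E2, fd E1 -> fd E2 -> E1 `&` E2 = set0 ->
  p i (E1 `|` E2) = p i E1 + p i E2.

Let FP : ProperFilter U. Proof. exact: ultra_proper. Qed.

Definition Lf (E : set (I -> B)) : R := lim ((fun i => p i E) @ U).

Lemma Lf_cvg E : fd E -> (fun i => p i E) @ U --> Lf E.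
Proof.
move=> fE; have [l hl] := @ulim_ex R U hU (fun i => p i E) 0 1 (fun i => p01 i fE).
by rewrite /Lf (cvg_lim _ hl) //; exact: norm_hausdorff.
Qed.

Lemma Lf01 E : fd E -> 0 <= Lf E <= 1.
Proof.
move=> fE; have h := Lf_cvg fE; apply/andP; split.
  by apply: (ulim_ge hU h) => i; have /andP[] := p01 i fE.
by apply: (ulim_le hU h) => i; have /andP[] := p01 i fE.
Qed.

Lemma Lf_add E1 E2 : fd E1 -> fd E2 -> E1 `&` E2 = set0 ->
  Lf (E1 `|` E2) = Lf E1 + Lf E2.
Proof.
move=> f1 f2 d12; apply: (@ulim_unique R U hU (fun i => p i (E1 `|` E2))).
  by apply: Lf_cvg; exact: fdU.
have -> : (fun i => p i (E1 `|` E2)) = ((fun i => p i E1) + (fun i => p i E2))%R.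
  by apply/funext => i; rewrite padd.
by apply: cvgD; exact: Lf_cvg.
Qed.

Lemma Lf0 : Lf set0 = 0.
Proof.
have h : Lf set0 = Lf set0 + Lf set0.
  by rewrite -Lf_add ?setU0 ?set0I //; exact: fd0.
by move: h; lra.
Qed.

Lemma Lf1 : Lf setT = 1.
Proof.
apply: (@ulim_unique R U hU (fun i => p i setT)); first by apply: Lf_cvg; exact: fdT.
have -> : (fun i => p i setT) = (fun=> 1) by apply/funext => i; rewrite p1.
exact: cvg_cst.
Qed.

Lemma Lf_big (F : nat -> set (I -> B)) n : (forall k, fd (F k)) -> trivIset setT F ->
  Lf (\big[setU/set0]_(i < n) F i) = \sum_(i < n) Lf (F i).
Proof.
move=> fF tF; elim: n => [|n ih]; first by rewrite !big_ord0 Lf0.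
rewrite !big_ord_recr /= Lf_add ?ih //.
- by apply: fd_big => i; exact: fF.
- apply/seteqP; split => // x [] /[swap] Fnx.
  rewrite -bigcup_mkord => -[i /= ilt Fix].
  have : F i `&` F n = set0.
    apply: (trivIsetP.1 tF) => //; apply/eqP => e; by rewrite e ltnn in ilt.
  by move=> /seteqP[+ _] => /(_ x) /=; apply.
Qed.

Definition mu0 (E : set (fdS I B)) : \bar R := (Num.max (Lf E) 0)%:E.

Lemma mu0_fd E : fd E -> mu0 E = (Lf E)%:E.
Proof. by move=> fE; rewrite /mu0 max_l //; have /andP[] := Lf01 fE. Qed.

Let mu00 : mu0 set0 = 0.
Proof. by rewrite mu0_fd ?Lf0 //; exact: fd0. Qed.

Let mu0_ge0 E : (0 <= mu0 E)%E.
Proof. by rewrite /mu0 lee_fin le_max lexx orbT. Qed.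

Let mu0_sig : semi_sigma_additive mu0.
Proof.
move=> F mF tF mU.
have [K hK] := fd_sigma_fin fB mU mF tF erefl.
apply: cvg_near_cst; exists K => // n /= Kn.
have -> : \bigcup_n F n = \big[setU/set0]_(i < n) F i.
  apply/seteqP; split => x.
    move=> [k _ Fkx]; rewrite -bigcup_mkord; exists k => //=.
    rewrite ltnNge; apply/negP => nk.
    by move: Fkx; rewrite hK //; apply: leq_trans Kn nk.
  by rewrite -bigcup_mkord => -[k _ Fkx]; exists k.
rewrite mu0_fd; last by apply: fd_big => i; exact: mF.
rewrite Lf_big // -sumEFin big_mkord; apply: eq_bigr => i _.
by rewrite mu0_fd //; exact: mF.
Qed.

HB.instance Definition _ := isMeasure.Build _ _ _ mu0 mu00 mu0_ge0 mu0_sig.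

Definition Qf (E : set (g_sigma_algebraType (@cylI I B))) : \bar R :=
  let _ := p1 in measure_extension mu0 E.

Lemma cyl_sub_fd (E : set (g_sigma_algebraType (@cylI I B))) : measurable E ->
  (default_measure_display.-measurable).-sigma.-measurable (E : set (fdS I B)).
Proof.
apply: smallest_sub; first exact: smallest_sigma_algebra.
move=> S cS; apply: sub_sigma_algebra; exact: cylI_fd.
Qed.

Let Qf0 : Qf set0 = 0.
Proof. rewrite /Qf /=; exact: measure0. Qed.

Let Qf_ge0 E : (0 <= Qf E)%E.
Proof. rewrite /Qf /=; exact: measure_ge0. Qed.

Let Qf_sig : semi_sigma_additive Qf.
Proof.
move=> F mF tF mU; rewrite /Qf /=.
apply: (@measure_semi_sigma_additive _ _ _ (measure_extension mu0)) => //.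
- by move=> i; exact: cyl_sub_fd.
- exact: cyl_sub_fd.
Qed.

HB.instance Definition _ := isMeasure.Build _ _ _ Qf Qf0 Qf_ge0 Qf_sig.

Lemma Qf_fd E : fd E -> Qf E = (Lf E)%:E.
Proof.
move=> fE; rewrite /Qf /= /measure_extension measurable_mu_extE //.
exact: mu0_fd.
Qed.

Let Qf1 : Qf setT = 1%E.
Proof. by rewrite Qf_fd ?Lf1 //; exact: fdT. Qed.

HB.instance Definition _ := Measure_isProbability.Build _ _ _ Qf Qf1.

End GL.

Lemma GL (R : realType) (I : Type) (B : pointedType) (fB : finite_set [set: B])
  (U : set_system nat) (hU : UltraFilter U) (p : nat -> set (I -> B) -> R) :
  (forall i E, fd E -> 0 <= p i E <= 1) ->
  (forall i, p i setT = 1) ->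
  (forall i E1 E2, fd E1 -> fd E2 -> E1 `&` E2 = set0 ->
     p i (E1 `|` E2) = p i E1 + p i E2) ->
  exists Q : probability (g_sigma_algebraType (@cylI I B)) R,
    forall E, fd E -> exists r : R, Q E = r%:E /\ (fun i => p i E) @ U --> r.
Proof.
move=> p01 p1 padd.
exists (Qf fB hU p01 p1 padd) => E fE; exists (Lf U p E); split.
  exact: Qf_fd.
exact: Lf_cvg.
Qed.
Section prob_facts.
Context d (T : measurableType d) (R : realType) (P : probability T R).

Lemma pfin (S : set T) : measurable S -> P S = (fine (P S))%:E.
Proof. by move=> mS; rewrite fineK // fin_num_measure. Qed.

Lemma p01f (S : set T) : measurable S -> 0 <= fine (P S) <= 1.
Proof.
move=> mS; apply/andP; split; first by apply: fine_ge0; exact: measure_ge0.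
by rewrite -lee_fin -pfin //; exact: probability_le1.
Qed.

Lemma pUf (S1 S2 : set T) : measurable S1 -> measurable S2 -> S1 `&` S2 = set0 ->
  fine (P (S1 `|` S2)) = fine (P S1) + fine (P S2).
Proof.
move=> m1 m2 d12; rewrite measureU // fineD //; exact: fin_num_measure.
Qed.

End prob_facts.

Section PH.
Context d d' (T : measurableType d) (T' : measurableType d') (R : realType).
Variables (P : probability T' R) (h : set T -> set T').
Hypothesis hm : forall S, measurable S -> measurable (h S).
Hypothesis hC : forall S, measurable S ->
  h (~` S) `|` h S = h setT /\ h (~` S) `&` h S = set0.
Hypothesis hU : forall F : nat -> set T, h (\bigcup_k F k) = \bigcup_k h (F k).
Hypothesis hD : forall S1 S2, S1 `&` S2 = set0 -> h S1 `&` h S2 = set0.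

Lemma ph_C S : measurable S ->
  fine (P (h (~` S))) = fine (P (h setT)) - fine (P (h S)).
Proof.
move=> mS; have [e1 e2] := hC mS.
rewrite -e1 pUf ?addrK //; apply: hm => //; exact: measurableC.
Qed.

Lemma ph_sig (F : nat -> set T) : (forall n, measurable (F n)) -> trivIset setT F ->
  (fun n => \sum_(i < n) fine (P (h (F i)))) @ \oo --> fine (P (h (\bigcup_k F k))).
Proof.
move=> mF tF.
have mhF : forall n, measurable (h (F n)) by move=> n; exact: hm.
have thF : trivIset setT (fun n => h (F n)).
  apply/trivIsetP => i j _ _ ij; apply: hD; exact: (trivIsetP.1 tF).
have mU : measurable (\bigcup_k h (F k)) by apply: bigcupT_measurable.
have := @measure_semi_sigma_additive _ _ _ P (fun n => h (F n)) mhF thF mU.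
rewrite -hU => h1.
have h2 : (fun n => (\sum_(i < n) fine (P (h (F i))))%:E) @ \oo -->
    (fine (P (h (\bigcup_k F k))))%:E.
  rewrite -pfin; last by apply: hm; exact: bigcupT_measurable.
  apply: (cvg_trans _ h1); apply: near_eq_cvg; apply: nearW => n.
  by rewrite -sumEFin big_mkord; apply: eq_bigr => i _; rewrite -pfin.
apply: (cvg_trans _ (fine_cvg h2)); apply: near_eq_cvg; exact: nearW.
Qed.

End PH.

Section pl.
Context d (T : measurableType d) (R : realType).

Definition goodf (f : set T -> R) :=
  (forall S, measurable S -> f (~` S) = f setT - f S) /\
  (forall F : nat -> set T, (forall n, measurable (F n)) -> trivIset setT F ->
    (fun n => \sum_(i < n) f (F i)) @ \oo --> f (\bigcup_k F k)).

Lemma goodfM (f : set T -> R) c : goodf f -> goodf (fun S => f S * c).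
Proof.
move=> [fC fs]; split; first by move=> S mS; rewrite fC // mulrBl.
move=> F mF tF; have h := @cvgMr_tmp _ _ _ _ _ _ c (fs F mF tF).
have e : (fun n => \sum_(i < n) f (F i) * c) = (fun n => (\sum_(i < n) f (F i)) * c).
  by apply/funext => n; rewrite big_distrl.
by rewrite e; exact: h.
Qed.

Lemma pl_eq (G : set (set T)) (hG : @measurable _ T = <<s G >>) (GI : setI_closed G)
  (f g : set T -> R) : goodf f -> goodf g -> f setT = g setT ->
  (forall S, G S -> f S = g S) -> forall S, measurable S -> f S = g S.
Proof.
move=> [fC fs] [gC gs] fgT fgG S mS.
apply: (@dynkin_induction d T G (fun S => f S = g S) hG GI fgT fgG); last first.
  by rewrite -hG.
- move=> F mF tF e; apply: (cvg_unique _ (fs F mF tF)); first exact: norm_hausdorff.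
  have -> : (fun n => \sum_(i < n) f (F i)) = (fun n => \sum_(i < n) g (F i)).
    by apply/funext => n; apply: eq_bigr => i _; rewrite e.
  exact: gs.
- by move=> S' mS' e; rewrite fC // gC // e fgT.
Qed.

End pl.

Section pfwd.
Context d d' (T : measurableType d) (T' : measurableType d') (R : realType).
Variables (P : probability T R) (f : T -> T') (mf : measurable_fun setT f).

Definition pfwd (A : set T') : \bar R := let _ := mf in P (f @^-1` A).

Let pfwd0 : pfwd set0 = 0. Proof. by rewrite /pfwd /= preimage_set0 measure0. Qed.
Let pfwd_ge0 A : (0 <= pfwd A)%E. Proof. exact: measure_ge0. Qed.
Let pfwd_sig : semi_sigma_additive pfwd.
Proof. exact: (measure_semi_sigma_additive (s := pushforward P f)). Qed.
HB.instance Definition _ := isMeasure.Build _ _ _ pfwd pfwd0 pfwd_ge0 pfwd_sig.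
Let pfwd1 : pfwd setT = 1%E.
Proof. by rewrite /pfwd /= preimage_setT probability_setT. Qed.
HB.instance Definition _ := Measure_isProbability.Build _ _ _ pfwd pfwd1.

End pfwd.
Section zd.
Variable d : nat.
Local Notation X := (Zd d).

Definition ext (B : pointedType) (D D' : set X) (f : sub D -> B) : sub D' -> B :=
  fun w => match pselect (D (proj1_sig w)) with
           | left h => f (exist _ (proj1_sig w) h)
           | right _ => point end.
Arguments ext {B D} D' f.

Lemma ext_in (B : pointedType) (D D' : set X) (f : sub D -> B) (w : sub D')
  (h : D (proj1_sig w)) : ext D' f w = f (exist _ _ h).
Proof.
rewrite /ext; case: pselect => [h'|//]; congr f; congr exist.
exact: Prop_irrelevance.
Qed.

Lemma ext_out (B : pointedType) (D D' : set X) (f : sub D -> B) (w : sub D')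
  : ~ D (proj1_sig w) -> ext D' f w = point.
Proof. by rewrite /ext; case: pselect. Qed.

Definition detX (B : Type) (D : set X) (s : seq X) (E : set (sub D -> B)) :=
  forall x y : sub D -> B, (forall v (hv : D v), List.In v s ->
    x (exist _ v hv) = y (exist _ v hv)) -> E x -> E y.

Lemma detX_fd (B : Type) (D : set X) (s : seq X) (E : set (sub D -> B)) :
  detX s E -> fd E.
Proof.
have [s' hs'] : exists s' : seq (sub D),
    forall v (hv : D v), List.In v s -> List.In (exist _ v hv) s'.
  elim: s => [|v s [s' ih]]; first by exists [::].
  case: (pselect (D v)) => [h|nh].
    exists (exist _ v h :: s') => w hw /= [e|ws]; last by right; exact: ih.
    left; subst w; congr exist; exact: Prop_irrelevance.
  exists s' => w hw /= [e|ws]; last exact: ih.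
  by subst w.
move=> hE; exists s' => x y e; apply: hE => v hv vs; apply: e; exact: hs'.
Qed.

Lemma fd_detX (B : Type) (D : set X) (E : set (sub D -> B)) :
  fd E -> exists s, detX s E.
Proof.
move=> [s' hs']; exists (map (@proj1_sig _ _) s') => x y e; apply: hs' => w ws.
case: w ws => v hv ws; apply: e; apply/List.in_map_iff; exists (exist _ v hv).
by split.
Qed.

Lemma fd_ext (B : pointedType) (D D' : set X) (E : set (sub D' -> B)) :
  fd E -> fd (@ext B D D' @^-1` E).
Proof.
move=> /fd_detX[s hs]; apply: (@detX_fd _ _ s) => x y e /=; apply: hs => v hv vs.
case: (pselect (D v)) => [h|nh].
  by rewrite (@ext_in _ _ _ _ _ h) (@ext_in _ _ _ _ _ h) e.
by rewrite !ext_out.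
Qed.

Lemma fd_restr (B : pointedType) (D : set X) n (E : set (cfg B (D `\` box d n))) :
  fd E -> fd (@restr_out B d D n @^-1` E).
Proof.
move=> /fd_detX[s hs]; apply: (@detX_fd _ _ s) => x y e /=; apply: hs => v hv vs.
by rewrite /restr_out /= e.
Qed.

Lemma cyl_fd (B : pointedType) (D : set X) (S : set (sub D -> B)) : cyl S -> fd S.
Proof. exact: cylI_fd. Qed.

Lemma fd_measD (B : pointedType) (fB : finite_set [set: B]) (D : set X)
  (E : set (cfg B D)) : fd E -> measurable E.
Proof. exact: fd_meas. Qed.

Lemma measE_fd (B : pointedType) (fB : finite_set [set: B]) (D : set X) :
  @measurable _ (cfg B D) = <<s @fd (sub D) B >>.
Proof.
apply/seteqP; split.
  apply: smallest_sub; first exact: smallest_sigma_algebra.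
  move=> S cS; apply: sub_sigma_algebra; exact: cyl_fd.
apply: smallest_sub; first exact: sigma_algebra_measurable.
move=> S fS; exact: fd_measD.
Qed.

Lemma fd_setI_closed (I B : Type) : setI_closed (@fd I B).
Proof. by move=> S1 S2; exact: fdI. Qed.

Lemma meas_to_cfg dT (T : measurableType dT) (B : pointedType) (D : set X)
  (f : T -> cfg B D) :
  (forall w a, measurable (f @^-1` [set g | g w = a])) -> measurable_fun setT f.
Proof.
move=> h; apply: (@measurability _ _ _ _ setT f (@cyl B d D)) => //.
move=> S [S' [w [a ->]] <-]; rewrite setTI; exact: h.
Qed.

End zd.
Arguments ext {d B D} D' f.
Lemma mem_In (T : eqType) (x : T) (s : seq T) : x \in s -> List.In x s.
Proof.
elim: s => [//|y s ih]; rewrite in_cons => /orP[/eqP ->|xs]; first by left.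
by right; apply: ih.
Qed.

Section fin_zd.
Variable d : nat.
Local Notation X := (Zd d).

Lemma fin_list (F : set X) : finite_set F -> exists s : seq X, forall v, F v -> List.In v s.
Proof.
move=> fF; pose toF (v : X) : {ffun 'I_d -> int} := [ffun j => v j].
have := finite_image toF fF; move=> /finite_seqP[s' hs'].
exists (map (fun g : {ffun 'I_d -> int} => fun j => g j) s') => v Fv.
have -> : v = (fun j => toF v j) by apply/funext => j; rewrite ffunE.
apply: List.in_map; apply: mem_In.
have : [set toF x | x in F] (toF v) by exists v.
by rewrite hs'.
Qed.

Lemma box_list n : exists s : seq X, forall v, box d n v -> List.In v s.
Proof.
exists (map (fun g : {ffun 'I_d -> 'I_(n + n).+1} => fun j => (g j)%:Z - n%:Z)
  (enum [set: {ffun 'I_d -> 'I_(n + n).+1}])) => v bv.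
pose g : {ffun 'I_d -> 'I_(n + n).+1} := [ffun j => inord (absz (v j + n%:Z))].
have -> : v = (fun j => (g j)%:Z - n%:Z).
  apply/funext => j; rewrite ffunE inordK; have := bv j; first by lia.
  by have := bv j; lia.
apply: List.in_map; apply: mem_In; by rewrite mem_enum in_setT.
Qed.

Lemma box_mono k n : (k <= n)%N -> box d k `<=` box d n.
Proof. by move=> kn v bv j; have := bv j; lia. Qed.

Lemma list_box (s : seq X) : exists k, forall v, List.In v s -> box d k v.
Proof.
elim: s => [|v s [k ih]]; first by exists 0%N.
exists (maxn (\max_(j < d) absz (v j)) k) => w /= [e|ws].
  subst w; move=> j; have : (absz (v j) <= \max_(j < d) absz (v j))%N.
    exact: (@leq_bigmax _ (fun j : 'I_d => absz (v j)) j).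
  move: (\max_(j < d) absz (v j)) => M hM.
  have : (M <= maxn M k)%N by exact: leq_maxl.
  move: (maxn M k) => K hK; lia.
apply: (box_mono _ (ih _ ws)); exact: leq_maxr.
Qed.

End fin_zd.
Lemma measure_big_le dT (T : measurableType dT) (R : realType)
  (P : {measure set T -> \bar R}) (V : Type) (S : V -> set T) (c : R) (s : seq V) :
  (forall v, measurable (S v)) -> (forall v, (P (S v) <= c%:E)%E) ->
  (P (\big[setU/set0]_(v <- s) S v) <= ((size s)%:R * c)%:E)%E.
Proof.
move=> mS hS; elim: s => [|v s ih]; first by rewrite big_nil measure0 mul0r.
rewrite big_cons; apply: le_trans (measureU2 _ (mS v) _) _.
  by apply: bigsetU_measurable => w _; exact: mS.
rewrite /= -[(size s).+1]addn1 natrD mulrDl mul1r addrC EFinD.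
exact: leeD.
Qed.

Lemma neq_meas (B : pointedType) (fB : finite_set [set: B]) (d : nat) (D1 D2 : set (Zd d))
  (w1 : sub D1) (w2 : sub D2) :
  measurable [set p : cfg B D1 * cfg B D2 | p.1 w1 <> p.2 w2].
Proof.
have [lB hlB] := (finite_seqP _).1 fB.
have inlB b : b \in lB by have : [set: B] b by []; rewrite hlB.
have -> : [set p : cfg B D1 * cfg B D2 | p.1 w1 <> p.2 w2] =
    \big[setU/set0]_(a <- lB) ([set f : cfg B D1 | f w1 = a] `*` ~` [set f : cfg B D2 | f w2 = a]).
  apply/seteqP; split => p.
    move=> /= hp; rewrite -bigcup_seq; exists (p.1 w1); first exact: inlB.
    by split => //= e; apply: hp.
  by rewrite -bigcup_seq => -[a _ [/= -> h]] e; apply: h; rewrite -e.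
apply: bigsetU_measurable => a _; apply: measurableX.
  by apply: sub_sigma_algebra; exists w1, a.
by apply: measurableC; apply: sub_sigma_algebra; exists w2, a.
Qed.
Section pairs.
Variables (A : pointedType) (d : nat).
Hypothesis fA : finite_set [set: A].
Local Notation X := (Zd d).

Lemma fAA : finite_set [set: (A * A)%type].
Proof.
have -> : [set: (A * A)%type] = [set: A] `*` [set: A] by apply/seteqP; split.
exact: finite_setX.
Qed.

Definition psi (D : set X) (p : (sub D -> A) * (sub D -> A)) : sub D -> (A * A)%type :=
  fun w => (p.1 w, p.2 w).

Definition splitc (D : set X) (g : sub D -> (A * A)%type) : (sub D -> A) * (sub D -> A) :=
  (fun w => (g w).1, fun w => (g w).2).

Lemma psi_meas (D : set X) :
  measurable_fun setT (@psi D : cfg A D * cfg A D -> cfg (A * A)%type D).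
Proof.
apply: meas_to_cfg => w [a1 a2].
have -> : (@psi D : cfg A D * cfg A D -> cfg (A * A)%type D) @^-1` [set g | g w = (a1, a2)] =
  [set f : cfg A D | f w = a1] `*` [set f : cfg A D | f w = a2].
  apply/seteqP; split => -[f1 f2] /=; rewrite /psi /=; first by case => -> ->.
  by case=> -> ->.
by apply: measurableX; apply: sub_sigma_algebra; [exists w, a1|exists w, a2].
Qed.

Lemma splitc_meas (D : set X) :
  measurable_fun setT (@splitc D : cfg (A * A)%type D -> (cfg A D * cfg A D)%type).
Proof.
apply: measurable_fun_pair.
  apply: meas_to_cfg => w a; apply: fd_measD; first exact: fAA.
  by exists [:: w] => x y e /= <-; rewrite e //; left.
apply: meas_to_cfg => w a; apply: fd_measD; first exact: fAA.
by exists [:: w] => x y e /= <-; rewrite e //; left.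
Qed.

Lemma restr_meas (D : set X) n :
  measurable_fun setT (@restr_out A d D n : cfg A D -> cfg A (D `\` box d n)).
Proof.
apply: meas_to_cfg => w a; apply: sub_sigma_algebra.
by exists (exist _ (proj1_sig w) (proj1 (proj2_sig w))), a.
Qed.

Lemma ext_psi1 (D D' : set X) (p : (sub D -> A) * (sub D -> A)) :
  (fun w => (ext D' (psi p) w).1) = ext D' p.1.
Proof. by apply/funext => w; rewrite /ext; case: pselect. Qed.

Lemma ext_psi2 (D D' : set X) (p : (sub D -> A) * (sub D -> A)) :
  (fun w => (ext D' (psi p) w).2) = ext D' p.2.
Proof. by apply/funext => w; rewrite /ext; case: pselect. Qed.

Lemma restr_ext (D D' : set X) n (f : sub D -> A) :
  restr_out n (ext D' f) = ext (D' `\` box d n) (restr_out n f).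
Proof.
apply/funext => -[v [hv nb]]; rewrite /restr_out /ext /=.
case: pselect => [h|nh]; case: pselect => [h'|nh'] //.
- by congr f; congr exist; exact: Prop_irrelevance.
- by exfalso; apply: nh'; split.
- by exfalso; apply: nh; case: h'.
Qed.

End pairs.
Lemma mpre dT dT' (T : measurableType dT) (T' : measurableType dT') (f : T -> T')
  (E : set T') : measurable_fun setT f -> measurable E -> measurable (f @^-1` E).
Proof. by move=> mf mE; rewrite -[_ @^-1` _]setTI; exact: mf. Qed.

Section goodf_sec.
Context d1 d2 d3 (T1 : measurableType d1) (T2 : measurableType d2) (T : measurableType d3)
  (R : realType) (P : probability (T1 * T2)%type R).

Lemma goodf_ph (h : set T -> set (T1 * T2)%type) :
  (forall S, measurable S -> measurable (h S)) ->
  (forall S, measurable S -> h (~` S) `|` h S = h setT /\ h (~` S) `&` h S = set0) ->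
  (forall F : nat -> set T, h (\bigcup_k F k) = \bigcup_k h (F k)) ->
  (forall S1 S2, S1 `&` S2 = set0 -> h S1 `&` h S2 = set0) ->
  goodf (fun S => fine (P (h S))).
Proof.
move=> hm hC hU hD; split; first by move=> S mS; exact: ph_C.
by move=> F mF tF; exact: ph_sig.
Qed.

Lemma goodf_hL (f : T1 -> T) (mf : measurable_fun setT f) (C : set T2) (mC : measurable C) :
  goodf (fun S => fine (P ((f @^-1` S) `*` C))).
Proof.
apply: goodf_ph.
- by move=> S mS; apply: measurableX => //; exact: mpre.
- move=> S mS; split; apply/seteqP; split => -[x y] /=.
  + by move=> [[_ Cy]|[_ Cy]].
  + by move=> [_ Cy]; case: (pselect (S (f x))) => h; [right|left].
  + by move=> [[nS _] [hS _]].
  + by [].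
- by move=> F; rewrite preimage_bigcup setX_bigcupl.
- move=> S1 S2 e; apply/seteqP; split => // -[x y] /= [[h1 _] [h2 _]].
  by have : (S1 `&` S2) (f x) by [split]; rewrite e.
Qed.

End goodf_sec.

Lemma goodf_hR d1 d2 (T1 : measurableType d1) (T2 : measurableType d2)
  (R : realType) (P : probability (T1 * T2)%type R) (K : set T1) (mK : measurable K) :
  goodf (fun S : set T2 => fine (P (K `*` S))).
Proof.
apply: (@goodf_ph _ _ _ T1 T2 T2 R P (fun S => K `*` S)).
- by move=> S mS; apply: measurableX.
- move=> S mS; split; apply/seteqP; split => -[x y] /=.
  + by move=> [[Kx _]|[Kx _]].
  + by move=> [Kx _]; case: (pselect (S y)) => h; [right|left].
  + by move=> [[_ nS] [_ hS]].
  + by [].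
- by move=> F; rewrite setX_bigcupr.
- move=> S1 S2 e; apply/seteqP; split => // -[x y] /= [[_ h1] [_ h2]].
  by have : (S1 `&` S2) y by [split]; rewrite e.
Qed.



Lemma goodf_P d (T : measurableType d) (R : realType) (P : probability T R) :
  goodf (fun S => fine (P S)).
Proof.
split.
  move=> S mS; apply: (@ph_C _ _ T T R P id) => // S' mS'.
  split; apply/seteqP; split => x //=.
    by move=> _; case: (pselect (S' x)) => h'; [right|left].
  by move=> [].
move=> F mF tF; exact: (@ph_sig _ _ T T R P id).
Qed.
Section main.
Variables (A : pointedType) (d : nat) (R : realType) (D : nat -> set (Zd d))
  (mu : forall i, probability (cfg A (D i)) R) (rho : nat -> R).
Hypothesis fA : finite_set [set: A].
Hypothesis rate : rate_function rho.
Hypothesis hmix : forall n, (1 <= n)%N -> forall i j, box d n `<=` D i `&` D j ->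
  exists pi, mixing_coupling rho n (mu i) (mu j) pi.
Hypothesis Dinc : forall i, D i `<=` D i.+1.
Hypothesis Dcov : \bigcup_i D i = [set: Zd d].
Variables (U : set_system nat) (hU : UltraFilter U).
Hypothesis oU : forall N, U [set i | (N <= i)%N].

Lemma Dmono i j : (i <= j)%N -> D i `<=` D j.
Proof.
move=> /subnK <-; elim: (j - i)%N => // k ih.
by rewrite addSn; apply: subset_trans ih _; exact: Dinc.
Qed.

Lemma Dlist (s : seq (Zd d)) : exists i0, forall i, (i0 <= i)%N ->
  forall v, List.In v s -> D i v.
Proof.
elim: s => [|v s [i0 ih]]; first by exists 0%N.
have : [set: Zd d] v by [].
rewrite -Dcov => -[j _ Djv].
exists (maxn j i0) => i hi w /= [<-|ws].
  by apply: (Dmono _ Djv); apply: leq_trans hi; exact: leq_maxl.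
by apply: ih ws; apply: leq_trans hi; exact: leq_maxr.
Qed.

Lemma Dbox n : exists i0, forall i, (i0 <= i)%N -> box d n `<=` D i.
Proof.
have [s hs] := box_list d n; have [i0 h0] := Dlist s.
by exists i0 => i hi v bv; apply: h0 hi _ (hs _ bv).
Qed.

Definition pnu i (E : set (sub [set: Zd d] -> A)) : R :=
  fine (mu i (@ext d A (D i) setT @^-1` E)).

Lemma nu_ex : exists nu : probability (cfg A [set: Zd d]) R,
  forall E, fd E -> exists r : R, nu E = r%:E /\ (fun i => pnu i E) @ U --> r.
Proof.
have := @GL R (sub [set: Zd d]) A fA U hU pnu.
apply.
- move=> i E fE; apply: p01f; apply: fd_measD => //; exact: fd_ext.
- by move=> i; rewrite /pnu preimage_setT probability_setT.
- move=> i E1 E2 f1 f2 d12; rewrite /pnu preimage_setU pUf //.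
  + apply: fd_measD => //; exact: fd_ext.
  + apply: fd_measD => //; exact: fd_ext.
  + by rewrite -preimage_setI d12 preimage_set0.
Qed.

Lemma cev_fd (D0 : set (Zd d)) (F : set (Zd d)) (eta : Zd d -> A) (s : seq (Zd d)) :
  (forall v, F v -> List.In v s) -> fd (cyl_event D0 F eta).
Proof.
move=> hs; apply: (@detX_fd _ _ _ s) => x y e hx v hv Fv.
by rewrite -e; [exact: hx|exact: hs].
Qed.

Lemma cauchy_bound i j n k (F : set (Zd d)) (s : seq (Zd d)) (eta : Zd d -> A) :
  (1 <= n)%N -> box d n `<=` D i `&` D j -> (k <= n)%N -> F `<=` box d k ->
  (forall v, F v -> List.In v s) ->
  fine (mu i (cyl_event (D i) F eta)) <=
  fine (mu j (cyl_event (D j) F eta)) + (size s)%:R * rho (n - k).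
Proof.
move=> n1 bn kn Fk hs.
have [pi [m1 [m2 [_ dis]]]] := hmix n1 bn.
have mEi : measurable (cyl_event (D i) F eta) by apply: fd_measD => //; exact: cev_fd hs.
have mEj : measurable (cyl_event (D j) F eta) by apply: fd_measD => //; exact: cev_fd hs.
have FD v : F v -> D i v /\ D j v.
  by move=> Fv; apply: bn; apply: (box_mono kn); exact: Fk.
pose S v := [set p : cfg A (D i) * cfg A (D j) |
  F v /\ exists h1 h2, p.1 (exist _ v h1) <> p.2 (exist _ v h2)].
have mS v : measurable (S v).
  case: (pselect (F v)) => Fv.
    have [h1 h2] := FD v Fv.
    have -> : S v = [set p : cfg A (D i) * cfg A (D j) |
        p.1 (exist _ v h1) <> p.2 (exist _ v h2)].
      apply/seteqP; split => p /=.
        move=> [_ [h1' [h2' ne]]] e; apply: ne.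
        by rewrite (Prop_irrelevance h1' h1) (Prop_irrelevance h2' h2).
      by move=> ne; split => //; exists h1, h2.
    exact: neq_meas.
  by have -> : S v = set0 by apply/seteqP; split => // p [].
have bS v : (pi (S v) <= (rho (n - k))%:E)%E.
  case: (pselect (F v)) => Fv.
    have [h1 h2] := FD v Fv.
    have -> : S v = [set p : cfg A (D i) * cfg A (D j) |
        p.1 (exist _ v h1) <> p.2 (exist _ v h2)].
      apply/seteqP; split => p /=.
        move=> [_ [h1' [h2' ne]]] e; apply: ne.
        by rewrite (Prop_irrelevance h1' h1) (Prop_irrelevance h2' h2).
      by move=> ne; split => //; exists h1, h2.
    by apply: dis => //; exact: Fk.
  have -> : S v = set0 by apply/seteqP; split => // p [].
  by rewrite measure0 lee_fin; case: rate => _ [].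
have incl : cyl_event (D i) F eta `*` setT `<=`
    (setT `*` cyl_event (D j) F eta) `|` \big[setU/set0]_(v <- s) S v.
  move=> [f f'] [/= Ef _].
  case: (pselect (cyl_event (D j) F eta f')) => Ef'; first by left.
  right.
  have [v [hv [Fv ne]]] : exists v (hv : D j v), F v /\ f' (exist _ v hv) <> eta v.
    apply: contra_notP Ef' => nQ v hv Fv; apply: contra_notP nQ => ne.
    by exists v, hv.
  have : S v (f, f').
    have [h1 _] := FD v Fv; split => //; exists h1, hv => /= e.
    by apply: ne; rewrite -e; exact: Ef.
  have : List.In v s by exact: hs.
  elim: (s) => [//|w s' ih] /= [<-|vs'] Sv; rewrite big_cons; first by left.
  by right; exact: ih.
have mW : measurable (\big[setU/set0]_(v <- s) S v).
  by apply: bigsetU_measurable => v _; exact: mS.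
have h1 : (mu i (cyl_event (D i) F eta) <=
    mu j (cyl_event (D j) F eta) + ((size s)%:R * rho (n - k))%:E)%E.
  rewrite -m1 // -m2 //.
  apply: le_trans (le_measure pi _ _ incl) _; rewrite ?inE.
  - by apply: measurableX.
  - by apply: measurableU => //; apply: measurableX.
  apply: le_trans (measureU2 _ _ mW) _; first by apply: measurableX.
  by apply: leeD => //; exact: measure_big_le.
by move: h1; rewrite (pfin (mu i) mEi) (pfin (mu j) mEj) -EFinD lee_fin.
Qed.

Lemma cev_cvg (F : set (Zd d)) (eta : Zd d -> A) (fF : finite_set F) (r : R) :
  (fun i => pnu i (cyl_event setT F eta)) @ U --> r ->
  (fun i => mu i (cyl_event (D i) F eta)) @ \oo --> r%:E.
Proof.
move=> hr.
have [s hs] := fin_list fF.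
have [k hk] := list_box s.
have Fk : F `<=` box d k by move=> v Fv; apply: hk; exact: hs.
have [i1 h1] := Dlist s.
have pe i : (i1 <= i)%N ->
    pnu i (cyl_event setT F eta) = fine (mu i (cyl_event (D i) F eta)).
  move=> hi; rewrite /pnu; congr (fine (mu i _)); apply/seteqP; split => f /= hf v hv Fv.
    have := hf v I Fv.
    by rewrite (@ext_in d A (D i) setT f (exist _ v I) hv).
  have hDv : D i v by apply: h1 hi _ (hs _ Fv).
  rewrite (@ext_in d A (D i) setT f (exist _ v hv) hDv).
  by rewrite -(hf v hDv Fv); congr f; congr exist; exact: Prop_irrelevance.
have FP : ProperFilter U by exact: ultra_proper.
apply: cvg_EFin.
  apply: nearW => i; apply: fin_num_measure; apply: fd_measD => //.
  exact: cev_fd hs.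
apply/cvgrPdist_lt => e e0.
set S := (size s)%:R : R.
have S0 : 0 <= S by rewrite /S ler0n.
pose e' := e / 2 / (S + 1).
have e'0 : 0 < e' by rewrite /e' divr_gt0 // ?divr_gt0 //; lra.
have e'S : e' * (S + 1) = e / 2.
  by rewrite /e' divfK //; apply: lt0r_neq0; lra.
have [rdec [rge0 rcvg]] := rate.
have := (cvgrPdist_lt _ _).1 rcvg e' e'0 => -[m _ hm].
pose n := (k + m).+1.
have n1 : (1 <= n)%N by [].
have kn : (k <= n)%N by rewrite /n; lia.
have rn : rho (n - k) <= e'.
  have : rho (n - k) <= rho m by apply: rdec; rewrite /n; lia.
  have := hm m (leqnn m); rewrite /= sub0r normrN => hm'.
  have := ler_norm (rho m); lra.
have [i0 h0] := Dbox n.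
pose N := maxn i0 i1.
have Ui : U ([set j | (N <= j)%N] `&` [set j | `|r - pnu j (cyl_event setT F eta)| < e / 2]).
  apply: filterI; first exact: oU.
  have := (cvgrPdist_lt _ _).1 hr (e / 2); apply; lra.
have [j [Nj hj]] := filter_ex Ui.
exists N => // i /= Ni.
have bn a b : (N <= a)%N -> (N <= b)%N -> box d n `<=` D a `&` D b.
  move=> Na Nb v bv; split; apply: h0 bv.
    by apply: leq_trans Na; exact: leq_maxl.
  by apply: leq_trans Nb; exact: leq_maxl.
have c1 := cauchy_bound eta n1 (bn _ _ Ni Nj) kn Fk hs.
have c2 := cauchy_bound eta n1 (bn _ _ Nj Ni) kn Fk hs.
have hj' : `|r - fine (mu j (cyl_event (D j) F eta))| < e / 2.
  by rewrite -pe //; apply: leq_trans Nj; exact: leq_maxr.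
move: hj' c1 c2; rewrite -/S !ltr_norml => /andP[hj1 hj2] c1 c2.
have hc : S * rho (n - k) <= e / 2 by nra.
apply/andP; split; lra.
Qed.

Lemma coupling_ex (nu : probability (cfg A [set: Zd d]) R)
  (hnu : forall E, fd E -> exists r : R, nu E = r%:E /\ (fun i => pnu i E) @ U --> r)
  n : (1 <= n)%N -> exists pi, mixing_coupling rho n nu nu pi.
Proof.
move=> n1.
have FP : ProperFilter U by exact: ultra_proper.
have [i0 h0] := Dbox n.
have hc i : exists pi, mixing_coupling rho n (mu (maxn i i0)) (mu (maxn i i0)) pi.
  by apply: hmix n1 _ _ _ => v bv; split; apply: h0 bv; exact: leq_maxr.
pose pic i := sval (cid (hc i)).
have pics i : mixing_coupling rho n (mu (maxn i i0)) (mu (maxn i i0)) (pic i).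
  exact: (svalP (cid (hc i))).
pose psii i : (cfg A (D (maxn i i0)) * cfg A (D (maxn i i0)))%type ->
  cfg (A * A)%type (D (maxn i i0)) := @psi A d _.
pose exi i : cfg (A * A)%type (D (maxn i i0)) -> cfg (A * A)%type [set: Zd d] :=
  ext setT.
pose q i (E : set (sub [set: Zd d] -> (A * A)%type)) :=
  fine (pic i (psii i @^-1` (exi i @^-1` E))).
have mq i E : fd E -> measurable (psii i @^-1` (exi i @^-1` E)).
  move=> fE; apply: mpre; first exact: psi_meas.
  by apply: fd_measD; [exact: fAA|exact: fd_ext].
have q1 i : q i setT = 1.
  by rewrite /q !preimage_setT probability_setT.
have qadd i E1 E2 : fd E1 -> fd E2 -> E1 `&` E2 = set0 -> q i (E1 `|` E2) = q i E1 + q i E2.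
  move=> f1 f2 d12; rewrite /q !preimage_setU.
  rewrite (pUf (pic i) (mq i E1 f1) (mq i E2 f2)) //.
  apply/seteqP; split => // p [/= h1 h2].
  have : (E1 `&` E2) (exi i (psii i p)) by split.
  by rewrite d12.
have [Q hQ] := @GL R (sub [set: Zd d]) (A * A)%type (fAA fA) U hU q
  (fun i E fE => p01f (pic i) (mq i E fE)) q1 qadd.
pose spl : cfg (A * A)%type [set: Zd d] -> (cfg A [set: Zd d] * cfg A [set: Zd d])%type :=
  @splitc A d [set: Zd d].
have mspl : measurable_fun setT spl by exact: splitc_meas.
pose PI : probability (cfg A [set: Zd d] * cfg A [set: Zd d])%type R :=
  @pfwd _ _ _ _ R Q spl mspl.
have PIE S : PI S = Q (spl @^-1` S) by [].
have Ueq (x y : nat -> R) (l : R) : x @ U --> l -> (forall i, (i0 <= i)%N -> x i = y i) ->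
    y @ U --> l.
  move=> hx hxy; apply: (cvg_trans _ hx); apply: near_eq_cvg.
  by apply: (filterS _ (oU i0)) => i /= hi; rewrite hxy.
have fd_spl1 (E : set (sub [set: Zd d] -> A)) : fd E -> fd (spl @^-1` (E `*` setT)).
  move=> /fd_detX[s hs]; apply: (@detX_fd _ _ _ s) => x y e [/= Ex _]; split => //.
  by apply: (hs _ _ _ Ex) => v hv vs /=; rewrite e.
have fd_spl2 (E : set (sub [set: Zd d] -> A)) : fd E -> fd (spl @^-1` (setT `*` E)).
  move=> /fd_detX[s hs]; apply: (@detX_fd _ _ _ s) => x y e [_ /= Ex]; split => //.
  by apply: (hs _ _ _ Ex) => v hv vs /=; rewrite e.
pose exA i : cfg A (D (maxn i i0)) -> cfg A [set: Zd d] := ext setT.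
have mext i (E : set (sub [set: Zd d] -> A)) : fd E -> measurable (exA i @^-1` E).
  by move=> fE; apply: fd_measD => //; exact: fd_ext.
have splpsi i p : spl (exi i (psii i p)) = (exA i p.1, exA i p.2).
  rewrite /spl /splitc; congr pair.
    exact: (@ext_psi1 A d (D (maxn i i0)) setT p).
  exact: (@ext_psi2 A d (D (maxn i i0)) setT p).
have exAE i : @ext d A (D (maxn i i0)) setT = exA i by [].
have fd_spl (G : set (cfg A [set: Zd d] * cfg A [set: Zd d])) (s : seq (Zd d)) :
    (forall p p' : cfg A [set: Zd d] * cfg A [set: Zd d],
      (forall v (hv : [set: Zd d] v), List.In v s ->
        p.1 (exist _ v hv) = p'.1 (exist _ v hv) /\ p.2 (exist _ v hv) = p'.2 (exist _ v hv)) ->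
      G p -> G p') -> fd (spl @^-1` G).
  move=> hG; apply: (@detX_fd _ _ _ s) => x y e; apply: hG => v hv vs /=.
  by rewrite e.
have exA_in i (f : cfg A (D (maxn i i0))) v (hv : [set: Zd d] v) (h : D (maxn i i0) v) :
    exA i f (exist _ v hv) = f (exist _ v h).
  exact: (@ext_in d A (D (maxn i i0)) setT f (exist _ v hv) h).
have rsE i (f : cfg A (D (maxn i i0))) :
    restr_out n (exA i f) = @ext d A (D (maxn i i0) `\` box d n) (setT `\` box d n) (restr_out n f).
  exact: restr_ext.
clearbody PI exA spl psii exi.
have PI1 : PI setT = 1%E by exact: probability_setT.
have m1 : forall B, measurable B -> PI (B `*` setT) = nu B.
  move=> B mB.
  have mBT : measurable (B `*` [set: cfg A [set: Zd d]]) by apply: measurableX.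
  suff e : fine (PI (B `*` setT)) = fine (nu B) by rewrite (pfin PI mBT) (pfin nu mB) e.
  apply: (@pl_eq _ _ R _ (measE_fd fA setT) (@fd_setI_closed _ _)
    (fun B => fine (PI (B `*` setT))) (fun B => fine (nu B))) => //.
  - exact: (goodf_hL PI (@measurable_id _ _ setT) measurableT).
  - exact: goodf_P.
  - by rewrite setXTT PI1 probability_setT.
  move=> E fE.
  have [r [Qr hr]] := hQ _ (fd_spl1 E fE).
  have [s [nus hs]] := hnu E fE.
  rewrite PIE Qr nus /=; apply: (ulim_unique hU hr).
  apply: (Ueq (fun i => pnu i E)) => // i hi.
  transitivity (pnu (maxn i i0) E); first by rewrite (maxn_idPl hi).
  rewrite /q /pnu; congr fine.
  have -> : psii i @^-1` (exi i @^-1` (spl @^-1` (E `*` setT))) = (exA i @^-1` E) `*` setT.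
    by apply/seteqP; split => p /=; rewrite splpsi.
  by rewrite exAE ((pics i).1 _ (mext i E fE)).
have m2 : forall C, measurable C -> PI (setT `*` C) = nu C.
  move=> C mC.
  have mTC : measurable ([set: cfg A [set: Zd d]] `*` C) by apply: measurableX.
  suff e : fine (PI (setT `*` C)) = fine (nu C) by rewrite (pfin PI mTC) (pfin nu mC) e.
  apply: (@pl_eq _ _ R _ (measE_fd fA setT) (@fd_setI_closed _ _)
    (fun C => fine (PI (setT `*` C))) (fun C => fine (nu C))) => //.
  - exact: (goodf_hR PI measurableT).
  - exact: goodf_P.
  - by rewrite setXTT PI1 probability_setT.
  move=> E fE.
  have [r [Qr hr]] := hQ _ (fd_spl2 E fE).
  have [s [nus hs]] := hnu E fE.
  rewrite PIE Qr nus /=; apply: (ulim_unique hU hr).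
  apply: (Ueq (fun i => pnu i E)) => // i hi.
  transitivity (pnu (maxn i i0) E); first by rewrite (maxn_idPl hi).
  rewrite /q /pnu; congr fine.
  have -> : psii i @^-1` (exi i @^-1` (spl @^-1` (setT `*` E))) = setT `*` (exA i @^-1` E).
    by apply/seteqP; split => p /=; rewrite splpsi.
  by rewrite exAE ((pics i).2.1 _ (mext i E fE)).
pose rs : cfg A [set: Zd d] -> cfg A ([set: Zd d] `\` box d n) := restr_out n.
have mrs : measurable_fun setT rs by exact: restr_meas.
have fdX (E1 E2 : set (sub [set: Zd d] -> A)) : fd E1 -> fd E2 -> fd (spl @^-1` (E1 `*` E2)).
  move=> /fd_detX[s1 h1] /fd_detX[s2 h2].
  apply: (fd_spl _ (s1 ++ s2)) => p p' e [/= e1 e2]; split.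
    apply: (h1 _ _ _ e1) => v hv vs; have [] := e v hv (List.in_or_app _ _ _ (or_introl vs)).
    by [].
  apply: (h2 _ _ _ e2) => v hv vs; have [] := e v hv (List.in_or_app _ _ _ (or_intror vs)).
  by [].
have fdrs (B : set (cfg A ([set: Zd d] `\` box d n))) : fd B -> fd (rs @^-1` B).
  exact: fd_restr.
have mB' i (B : set (cfg A ([set: Zd d] `\` box d n))) : fd B ->
    measurable (@ext d A (D (maxn i i0) `\` box d n) (setT `\` box d n) @^-1` B :
      set (cfg A (D (maxn i i0) `\` box d n))).
  by move=> fB; apply: fd_measD => //; exact: fd_ext.
have base (B : set (cfg A ([set: Zd d] `\` box d n))) (C : set (cfg A [set: Zd d])) :
    fd B -> fd C ->
    fine (PI (rs @^-1` B `*` C)) = fine (PI (rs @^-1` B `*` setT)) * fine (PI (setT `*` C)).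
  move=> fB fC.
  have [r3 [Q3 h3]] := hQ _ (fdX _ _ (fdrs B fB) fC).
  have [r1 [Q1 h1]] := hQ _ (fdX _ _ (fdrs B fB) (@fdT _ _)).
  have [r2 [Q2 h2]] := hQ _ (fdX _ _ (@fdT _ _) fC).
  rewrite !PIE Q3 Q1 Q2 /=; apply: (ulim_unique hU h3).
  have -> : (fun i => q i (spl @^-1` (rs @^-1` B `*` C))) =
      (fun i => q i (spl @^-1` (rs @^-1` B `*` setT)) * q i (spl @^-1` (setT `*` C))).
    apply/funext => i; rewrite /q.
    set B' := (@ext d A (D (maxn i i0) `\` box d n) (setT `\` box d n) @^-1` B :
      set (cfg A (D (maxn i i0) `\` box d n))).
    have -> : psii i @^-1` (exi i @^-1` (spl @^-1` (rs @^-1` B `*` C))) =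
        (restr_out n @^-1` B') `*` (exA i @^-1` C).
      by apply/seteqP; split => p /=; rewrite splpsi /= /rs rsE.
    have -> : psii i @^-1` (exi i @^-1` (spl @^-1` (rs @^-1` B `*` setT))) =
        (restr_out n @^-1` B') `*` setT.
      by apply/seteqP; split => p /=; rewrite splpsi /= /rs rsE.
    have -> : psii i @^-1` (exi i @^-1` (spl @^-1` (setT `*` C))) =
        setT `*` (exA i @^-1` C).
      by apply/seteqP; split => p /=; rewrite splpsi.
    rewrite ((pics i).2.2.1 _ _ (mB' i B fB) (mext i C fC)).
    rewrite fineM //; apply: fin_num_measure; apply: measurableX => //.
      by apply: mpre; [exact: restr_meas|exact: mB'].
    exact: mext.
  exact: cvgM.
have step1 (C : set (cfg A [set: Zd d])) : fd C ->
    forall B, measurable B ->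
    fine (PI (rs @^-1` B `*` C)) = fine (PI (rs @^-1` B `*` setT)) * fine (PI (setT `*` C)).
  move=> fC; have mC : measurable C by exact: fd_measD.
  apply: (@pl_eq _ _ R _ (measE_fd fA (setT `\` box d n)) (@fd_setI_closed _ _)
    (fun B => fine (PI (rs @^-1` B `*` C)))
    (fun B => fine (PI (rs @^-1` B `*` setT)) * fine (PI (setT `*` C)))).
  - exact: (goodf_hL PI mrs mC).
  - exact: (goodfM _ (goodf_hL PI mrs measurableT)).
  - by rewrite !preimage_setT setXTT PI1 /= mul1r.
  - by move=> B fB; exact: base.
have step2 (B : set (cfg A ([set: Zd d] `\` box d n))) : measurable B ->
    forall C, measurable C ->
    fine (PI (rs @^-1` B `*` C)) = fine (PI (rs @^-1` B `*` setT)) * fine (PI (setT `*` C)).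
  move=> mB C mC; rewrite mulrC; move: C mC.
  apply: (@pl_eq _ _ R _ (measE_fd fA setT) (@fd_setI_closed _ _)
    (fun C => fine (PI (rs @^-1` B `*` C)))
    (fun C => fine (PI (setT `*` C)) * fine (PI (rs @^-1` B `*` setT)))).
  - exact: (goodf_hR PI (mpre mrs mB)).
  - exact: (goodfM _ (goodf_hR PI measurableT)).
  - by rewrite setXTT PI1 /= mul1r.
  - by move=> C fC; rewrite mulrC; exact: step1.
exists PI; split; first exact: m1.
split; first exact: m2.
split.
  move=> B C mB mC.
  have mBC : measurable (rs @^-1` B `*` C) by apply: measurableX => //; exact: mpre.
  have mBT : measurable (rs @^-1` B `*` [set: cfg A [set: Zd d]]) by apply: measurableX => //; exact: mpre.
  have mTC : measurable ([set: cfg A [set: Zd d]] `*` C) by apply: measurableX.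
  rewrite (pfin PI mBC) (pfin PI mBT) (pfin PI mTC) -EFinM.
  by congr EFin; exact: step2.
move=> k v hv hv' kn bk.
pose S := [set p : cfg A [set: Zd d] * cfg A [set: Zd d] |
  p.1 (exist _ v hv) <> p.2 (exist _ v hv')].
have fS : fd (spl @^-1` S).
  apply: (fd_spl _ [:: v]) => p p' e /= ne e'; apply: ne.
  have [e1 _] := e v hv (or_introl erefl).
  have [_ e2] := e v hv' (or_introl erefl).
  by rewrite e1 e2.
have [r [Qr hr]] := hQ _ fS.
rewrite PIE Qr lee_fin; apply: (ulim_le hU hr) => i.
have hDv : D (maxn i i0) v by apply: (h0 _ (leq_maxr i i0)); exact: (box_mono kn).
rewrite /q.
have -> : psii i @^-1` (exi i @^-1` (spl @^-1` S)) =
    [set p : cfg A (D (maxn i i0)) * cfg A (D (maxn i i0)) |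
      p.1 (exist _ v hDv) <> p.2 (exist _ v hDv)].
  apply/seteqP; split => p /=; rewrite splpsi /S /=;
    by rewrite (exA_in i p.1 v hv hDv) (exA_in i p.2 v hv' hDv).
have mS' := neq_meas fA (exist _ v hDv : sub (D (maxn i i0))) (exist _ v hDv : sub (D (maxn i i0))).
rewrite -lee_fin -pfin //.
exact: ((pics i).2.2.2 k v hDv hDv kn bk).
Qed.





End main.

Unset Implicit Arguments.

Theorem proposition2p2 (A : pointedType) (d : nat) (R : realType)
  (D : nat -> set (Zd d)) (mu : forall i, probability (cfg A (D i)) R)
  (rho : nat -> R) :
  finite_set [set: A] ->
  (1 <= d)%N ->
  locally_mixing_with mu rho ->
  (forall i, D i `<=` D i.+1) ->
  \bigcup_i D i = [set: Zd d] ->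
  exists nu : probability (cfg A [set: Zd d]) R,
    (forall (F : set (Zd d)) (eta : Zd d -> A), finite_set F ->
       (fun i => mu i (cyl_event (D i) F eta)) @ \oo
         --> nu (cyl_event [set: Zd d] F eta)) /\
    @locally_mixing_with A d R unit (fun _ => [set: Zd d]) (fun _ => nu) rho.
Proof.
move=> fA _ [rate hmix] Dinc Dcov.
have [U [hU oU']] := @ultraFilterLemma nat (\oo) _.
have oU : forall N, U [set i | (N <= i)%N] by move=> N; apply: oU'; exists N.
have [nu hnu] := nu_ex mu fA hU.
exists nu; split.
  move=> F eta fF.
  have [s hs] := fin_list fF.
  have [r [nur hr]] := hnu _ (cev_fd [set: Zd d] eta hs).
  rewrite nur; exact: (cev_cvg fA rate hmix Dinc Dcov hU oU fF hr).
split => // n n1 [] [] _.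
exact: (coupling_ex fA hmix Dinc Dcov hU oU hnu n1).
Qed.
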